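(* Let $T_1$ and $T_2$ be trees with $\gamma_P(T_1) = \gamma(T_1)$ and $\gamma_P(T_2) = \gamma(T_2)$. Then $\gamma_P(T_1 \Box T_2) \ge \gamma_P(T_1)\gamma_P(T_2)$.
   Context: $\gamma(G)$ denotes the domination number of $G$ (minimum size of a set $D$ with $N[D]=V(G)$). For $S \subseteq V(G)$: initially all vertices of $S$ and their neighbors are observed; then, repeatedly, any vertex that is the only unobserved neighbor of some observed vertex becomes observed. $S$ is a power dominating set if eventually all vertices are observed; $\gamma_P(G)$ is the minimum size of a power dominating set. The Cartesian product $G \Box H$ has vertex set $V(G)\times V(H)$, with $(g_1,h_1)$ adjacent to $(g_2,h_2)$ iff either $g_1=g_2$ and $h_1h_2 \in E(H)$, or $h_1=h_2$ and $g_1g_2\in E(G)$. *)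

(* Defs.v *)
From mathcomp Require Import all_boot.
Set Implicit Arguments. Unset Strict Implicit. Unset Printing Implicit Defensive.

Section Graphs.
Variable T : finType.
Variable e : rel T.

Definition simple_graph := symmetric e /\ irreflexive e.

Definition connected_graph := (0 < #|T|) /\ forall x y : T, connect e x y.

Definition acyclic_graph := forall s : seq T, uniq s -> 3 <= size s -> ~~ cycle e s.

Definition tree := [/\ simple_graph, connected_graph & acyclic_graph].

Definition closed_nbh (S : {set T}) : {set T} :=
  S :|: [set w | [exists v in S, e v w]].

Definition dominating (D : {set T}) : bool := closed_nbh D == setT.

(* domination number: minimum size of a dominating set (setT is dominating) *)
Definition gamma : nat :=
  #|[arg min_(D < setT | dominating D) #|D|]|.

Definition prop_step (M : {set T}) : {set T} :=
  M :|: [set w | [exists v in M,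
          [&& e v w, w \notin M & [forall u, (e v u && (u \notin M)) ==> (u == w)]]]].

(* final set of observed vertices starting from S (the rule is monotone, so
   #|T| rounds reach the unique closure) *)
Definition observed (S : {set T}) : {set T} := iter #|T| prop_step (closed_nbh S).

Definition power_dominating (S : {set T}) : bool := observed S == setT.

Definition gammaP : nat :=
  #|[arg min_(S < setT | power_dominating S) #|S|]|.

End Graphs.

Lemma setT_dominating (T : finType) (e : rel T) : dominating e setT.
Proof. by rewrite /dominating /closed_nbh setTU. Qed.

Definition box (T1 T2 : finType) (e1 : rel T1) (e2 : rel T2) : rel (T1 * T2) :=
  fun x y => ((x.1 == y.1) && e2 x.2 y.2) || ((x.2 == y.2) && e1 x.1 y.1).

(* Main.v *)
Require Import Defs.
From mathcomp Require Import all_boot.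
Set Implicit Arguments. Unset Strict Implicit. Unset Printing Implicit Defensive.

Section Gen.
Variable T : finType.
Variable e : rel T.

Lemma prop_step_sub (M : {set T}) : M \subset prop_step e M.
Proof. exact: subsetUl. Qed.

Lemma iter_sub n (M : {set T}) : M \subset iter n (prop_step e) M.
Proof.
elim: n => [|n IH] //=; apply: subset_trans IH (prop_step_sub _).
Qed.

Lemma iter_fixpoint (M : {set T}) k :
  prop_step e (iter k (prop_step e) M) = iter k (prop_step e) M \/
  k <= #|iter k (prop_step e) M|.
Proof.
elim: k => [|k [IH|IH]] /=; first by right.
  by left; rewrite IH.
case: (eqVneq (prop_step e (iter k (prop_step e) M)) (iter k (prop_step e) M)) => Hf.
  by left; rewrite !Hf.
right; apply: leq_ltn_trans IH _; apply: proper_card.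
by rewrite properEneq eq_sym Hf prop_step_sub.
Qed.

Lemma observed_fix S : prop_step e (observed e S) = observed e S.
Proof.
rewrite /observed; case: (iter_fixpoint (closed_nbh e S) #|T|) => // H.
have -> : iter #|T| (prop_step e) (closed_nbh e S) = setT.
  by apply/eqP; rewrite eqEcard subsetT cardsT H.
by apply/eqP; rewrite eqEsubset subsetT prop_step_sub.
Qed.

Lemma observed_closed S v w :
  v \in observed e S -> e v w -> w \notin observed e S ->
  (forall u, e v u -> u \notin observed e S -> u = w) -> False.
Proof.
move=> Hv Hvw Hw Hu; move/negP: (Hw); apply.
rewrite -observed_fix /prop_step in_setU; apply/orP; right.
rewrite inE; apply/existsP; exists v; rewrite Hv Hvw Hw /=.
apply/forallP => u; apply/implyP => /andP [H1 H2]; apply/eqP; exact: Hu.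
Qed.

Lemma observed_sub S : closed_nbh e S \subset observed e S.
Proof. exact: iter_sub. Qed.

Lemma pd_setT : power_dominating e setT.
Proof.
rewrite /power_dominating eqEsubset subsetT /=.
apply: subset_trans (observed_sub _); by rewrite /closed_nbh setTU.
Qed.

Lemma gammaP_le S : power_dominating e S -> gammaP e <= #|S|.
Proof.
rewrite /gammaP; case: (arg_minnP (fun S : {set T} => #|S|) pd_setT) => D _ H HS.
exact: H.
Qed.

Lemma gammaP_spec : power_dominating e [arg min_(S < setT | power_dominating e S) #|S|].
Proof. by case: (arg_minnP (fun S : {set T} => #|S|) pd_setT). Qed.

Lemma gamma_le S : dominating e S -> gamma e <= #|S|.
Proof.
rewrite /gamma; case: (arg_minnP (fun S : {set T} => #|S|) (setT_dominating e)) => D _ H HS.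
exact: H.
Qed.

End Gen.

Definition fort (T : finType) (e : rel T) (F : {set T}) :=
  F != set0 /\ forall v w, v \notin F -> w \in F -> e v w ->
    exists2 w', w' \in F & (w' != w) && e v w'.

Lemma fort_hit (T : finType) (e : rel T) (F S : {set T}) :
  symmetric e -> fort e F -> power_dominating e S ->
  exists2 s, s \in S & s \in closed_nbh e F.
Proof.
move=> sym [F0 HF] PD.
case: (boolP [exists s, (s \in S) && (s \in closed_nbh e F)]).
  by case/existsP => s /andP [] ? ?; exists s.
rewrite negb_exists => /forallP Hn; exfalso.
have inv : forall M : {set T}, (forall x, x \in F -> x \notin M) ->
    (forall x, x \in F -> x \notin prop_step e M).
  move=> M HM w wF; rewrite /prop_step in_setU (negbTE (HM w wF)) /=.
  apply/negP; rewrite inE => /existsP [v /and4P [vM evw wM]].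
  move/forallP => Hall.
  have vF : v \notin F by apply/negP => /HM; rewrite vM.
  case: (HF v w vF wF evw) => w' w'F /andP [ww' evw'].
  by move: (Hall w'); rewrite evw' (HM w' w'F) /= (negbTE ww').
have H0 : forall x, x \in F -> x \notin closed_nbh e S.
  move=> w wF; rewrite /closed_nbh in_setU; apply/negP => /orP [wS|].
    by move: (Hn w); rewrite wS /closed_nbh in_setU wF.
  rewrite inE => /existsP [s /andP [sS esw]].
  move: (Hn s); rewrite sS /closed_nbh in_setU /= inE.
  case/norP => _ /existsP; apply; exists w; by rewrite wF sym.
have Hit : forall n x, x \in F -> x \notin iter n (prop_step e) (closed_nbh e S).
  by elim=> [|n IH] //= x xF; apply: inv.
case/set0Pn: F0 => x xF; move: (Hit #|T| x xF).
by rewrite -/(observed e S) (eqP PD) inE.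
Qed.

Lemma box_sym (T1 T2 : finType) (e1 : rel T1) (e2 : rel T2) :
  symmetric e1 -> symmetric e2 -> symmetric (box e1 e2).
Proof.
move=> s1 s2 x y; by rewrite /box eq_sym s2 [x.2 == _]eq_sym s1.
Qed.

Lemma box_fort (T1 T2 : finType) (e1 : rel T1) (e2 : rel T2) F1 F2 :
  fort e1 F1 -> fort e2 F2 -> fort (box e1 e2) (setX F1 F2).
Proof.
move=> [n1 H1] [n2 H2]; split.
  case/set0Pn: n1 => a aF; case/set0Pn: n2 => b bF.
  by apply/set0Pn; exists (a, b); rewrite in_setX aF bF.
move=> [x y] [x' y']; rewrite !in_setX /box /= => Hn /andP [x'F y'F].
case/orP => /andP [/eqP E He].
  subst x'; have yF : y \notin F2 by move: Hn; rewrite x'F.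
  case: (H2 y y' yF y'F He) => z zF /andP [zn ez].
  exists (x, z); first by rewrite in_setX x'F zF.
  by rewrite /= eqxx ez xpair_eqE negb_and zn orbT /=.

subst y'; have xF : x \notin F1 by move: Hn; rewrite y'F andbT.
case: (H1 x x' xF x'F He) => z zF /andP [zn ez].
exists (z, y); first by rewrite in_setX zF y'F.
by rewrite /= eqxx ez xpair_eqE negb_and zn /= orbT.
Qed.

Lemma box_nbh (T1 T2 : finType) (e1 : rel T1) (e2 : rel T2) F1 F2 x :
  x \in closed_nbh (box e1 e2) (setX F1 F2) ->
  (x.1 \in closed_nbh e1 F1) && (x.2 \in closed_nbh e2 F2).
Proof.
rewrite /closed_nbh !in_setU !inE => /orP [/andP [-> ->] //|].
case/existsP => [[a b]] /andP []; rewrite in_setX /box /= => /andP [aF bF].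
case/orP => /andP [/eqP E He]; subst.
  rewrite aF /=; apply/orP; right; apply/existsP; exists b; by rewrite bF.
rewrite bF /= andbT; apply/orP; right; apply/existsP; exists a; by rewrite aF.
Qed.

Lemma packing (T1 T2 : finType) (e1 : rel T1) (e2 : rel T2) k1 k2
  (f1 : 'I_k1 -> {set T1}) (f2 : 'I_k2 -> {set T2}) :
  symmetric e1 -> symmetric e2 ->
  (forall i, fort e1 (f1 i)) ->
  (forall i j x, x \in closed_nbh e1 (f1 i) -> x \in closed_nbh e1 (f1 j) -> i = j) ->
  (forall i, fort e2 (f2 i)) ->
  (forall i j x, x \in closed_nbh e2 (f2 i) -> x \in closed_nbh e2 (f2 j) -> i = j) ->
  forall S, power_dominating (box e1 e2) S -> k1 * k2 <= #|S|.
Proof.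
move=> s1 s2 F1 D1 F2 D2 S PD.
have H : forall p : 'I_k1 * 'I_k2, exists s,
    (s \in S) && (s \in closed_nbh (box e1 e2) (setX (f1 p.1) (f2 p.2))).
  move=> p; case: (fort_hit (box_sym s1 s2) (box_fort (F1 p.1) (F2 p.2)) PD).
  by move=> s sS sN; exists s; rewrite sS.
pose g p := xchoose (H p).
have gP p := xchooseP (H p).
have ginj : injective g.
  move=> p q Epq; move: (gP p) (gP q); rewrite -/(g p) -/(g q) -Epq.
  move=> /andP [_ /box_nbh /andP [a1 a2]] /andP [_ /box_nbh /andP [b1 b2]].
  case: p q Epq a1 a2 b1 b2 => [p1 p2] [q1 q2] /= _ a1 a2 b1 b2.
  by rewrite (D1 _ _ _ a1 b1) (D2 _ _ _ a2 b2).
have -> : k1 * k2 = #|g @: setT|.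
  by rewrite card_imset // cardsT card_prod !card_ord.
apply: subset_leq_card; apply/subsetP => x /imsetP [p _ ->].
by case/andP: (gP p).
Qed.

Section Tree.
Variable T : finType.
Variable e : rel T.

Definition leaf x := #|[set u | e x u]| == 1.

Lemma leaf_uniq a x y : leaf a -> e a x -> e a y -> x = y.
Proof.
case/cards1P => z Ez ex ey.
have : x \in [set u | e a u] by rewrite inE.
have : y \in [set u | e a u] by rewrite inE.
by rewrite Ez !inE => /eqP -> /eqP ->.
Qed.

Lemma nonleaf_nb w d : ~~ leaf w -> e w d -> exists2 x, e w x & x != d.
Proof.
move=> nl ewd; case: (boolP [exists x, e w x && (x != d)]).
  by case/existsP => x /andP [] ? ?; exists x.
rewrite negb_exists => /forallP H; exfalso; move/negP: nl; apply.
apply/cards1P; exists d; apply/setP => x; rewrite !inE.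
apply/idP/idP => [ewx|/eqP -> //]; move: (H x); rewrite ewx /=.
by rewrite negbK.
Qed.

Lemma nbh1 d y : (y \in closed_nbh e [set d]) = (y == d) || e d y.
Proof.
rewrite /closed_nbh in_setU in_set1 inE; congr (_ || _).
apply/existsP/idP => [[v /andP [] ]|edy]; first by rewrite in_set1 => /eqP ->.
by exists d; rewrite in_set1 eqxx.
Qed.

Lemma closed_connect' (A : {set T}) x y :
  (forall a b, a \in A -> e a b -> b \in A) -> x \in A -> connect e x y -> y \in A.
Proof.
move=> HA xA /connectP [p Hp ->]; elim: p x xA Hp => [|z p IH] x xA //=.
case/andP => exz Hp; apply: IH Hp; exact: HA exz.
Qed.

Hypothesis tr : tree e.

Lemma tr_sym : symmetric e. Proof. by case: tr => [[]]. Qed.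
Lemma tr_irr : irreflexive e. Proof. by case: tr => [[]]. Qed.

Lemma no_tri a b c : e a b -> e b c -> e c a -> False.
Proof.
move=> ab bc ca; case: tr => [_ _ ac]; move: (ac [:: a; b; c]).
have nab : a != b by apply: contraTneq ab => ->; rewrite tr_irr.
have nbc : b != c by apply: contraTneq bc => ->; rewrite tr_irr.
have nca : c != a by apply: contraTneq ca => ->; rewrite tr_irr.
rewrite /= !inE negb_or nab eq_sym nca nbc ab bc ca => /(_ isT isT).
done.
Qed.

Lemma no_sq a b c u : e a b -> e b c -> e c u -> e u a -> a != c -> b != u -> False.
Proof.
move=> ab bc cu ua nac nbu; case: tr => [_ _ ac]; move: (ac [:: a; b; c; u]).
have nab : a != b by apply: contraTneq ab => ->; rewrite tr_irr.
have nbc : b != c by apply: contraTneq bc => ->; rewrite tr_irr.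
have ncu : c != u by apply: contraTneq cu => ->; rewrite tr_irr.
have nua : u != a by apply: contraTneq ua => ->; rewrite tr_irr.
rewrite /= !inE !negb_or nab nac eq_sym nua nbc nbu ncu ab bc cu ua.
by move=> /(_ isT isT).
Qed.

Lemma key (D : {set T}) d :
  dominating e D -> d \in D ->
  ~~ [exists p : T * T, [&& e d p.1, e d p.2, leaf p.1, leaf p.2 & p.1 != p.2]] ->
  closed_nbh e [set d] != setT ->
  power_dominating e (D :\ d).
Proof.
move=> Dd dD no2 nT.
set Mf := observed e (D :\ d).
have M0 : forall x, x \in closed_nbh e (D :\ d) -> x \in Mf.
  by move=> x; apply/subsetP/observed_sub.
have U : forall w, w \notin Mf -> (w = d) \/ e d w.
  move=> w wM; have : w \in closed_nbh e D by rewrite (eqP Dd) in_setT.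
  rewrite /closed_nbh in_setU.
  case/orP => [wD|].
    case: (eqVneq w d) => [->|wd]; [by left|].
    suff : w \in Mf by rewrite (negbTE wM).
    by apply: M0; rewrite /closed_nbh in_setU in_setD1 wd wD.
  rewrite inE => /existsP [v /andP [vD evw]].
  case: (eqVneq v d) => [<-|vd]; [by right|].
  suff : w \in Mf by rewrite (negbTE wM).
  apply: M0; rewrite /closed_nbh in_setU; apply/orP; right.
  by rewrite inE; apply/existsP; exists v; rewrite in_setD1 vd vD.
have sym := tr_sym.
have A : forall w, e d w -> ~~ leaf w -> w \in Mf.
  move=> w edw nl; apply/negPn/negP => wM.
  have ewd : e w d by rewrite sym.
  case: (nonleaf_nb nl ewd) => x ewx xd.
  have xM : x \in Mf.
    apply/negPn/negP => /U [xd'|edx]; first by rewrite xd' eqxx in xd.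
    by apply: (no_tri edw ewx); rewrite sym.
  apply: (observed_closed xM _ wM); first by rewrite sym.
  move=> u exu /U [ud|edu].
    by subst u; exfalso; exact: (no_tri edw ewx exu).
  case: (eqVneq u w) => // uw; exfalso.
  have eud : e u d by rewrite sym.
  by apply: (no_sq edw ewx exu eud); rewrite eq_sym.
have B : d \in Mf.
  apply/negPn/negP => dM.
  have [z edz nlz] : exists2 z, e d z & ~~ leaf z.
    case: (boolP [exists z, e d z && ~~ leaf z]).
      by case/existsP => z /andP [] ? ?; exists z.
    rewrite negb_exists => /forallP H; exfalso; move/negP: nT; apply.
    rewrite eqEsubset subsetT /=; apply/subsetP => y _.
    case: tr => [_ [_ con] _]; apply: (closed_connect' _ _ (con d y)).
      move=> a b; rewrite !nbh1 => /orP [/eqP ->|eda] eab; first by rewrite eab orbT.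
      move: (H a); rewrite eda /= negbK => la.
      by rewrite (leaf_uniq la eab (_ : e a d)) ?eqxx // sym.
    by rewrite nbh1 eqxx.
  have zM := A z edz nlz.
  apply: (observed_closed zM _ dM); first by rewrite sym.
  move=> u ezu /U [//|edu]; exfalso; by apply: (no_tri edz ezu); rewrite sym.
rewrite /power_dominating eqEsubset subsetT /=; apply/subsetP => w _.
apply/negPn/negP => wM; case: (U w wM) => [wd|edw]; first by subst w; rewrite B in wM.
have lw : leaf w by apply/negPn/negP => /(A w edw); rewrite (negbTE wM).
apply: (observed_closed B edw wM) => u edu uM.
have lu : leaf u by apply/negPn/negP => /(A u edu); rewrite (negbTE uM).
case: (eqVneq u w) => // uw; exfalso; move/negP: no2; apply.
by apply/existsP; exists (u, w); rewrite /= edu edw lu lw uw.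
Qed.

End Tree.

Section TP.
Variable T : finType.
Variable e : rel T.
Hypothesis tr : tree e.

Lemma pair_fort d a b : e d a -> e d b -> leaf e a -> leaf e b -> a != b ->
  fort e [set a; b].
Proof.
move=> eda edb la lb ab; split; first by apply/set0Pn; exists a; rewrite !inE eqxx.
have sym := tr_sym tr.
move=> v w; rewrite !inE negb_or => /andP [va vb] /orP [] /eqP -> evw.
  have vd : v = d by apply: (leaf_uniq la); rewrite sym.
  by exists b; rewrite ?inE ?eqxx ?orbT // eq_sym ab vd.
have vd : v = d by apply: (leaf_uniq lb); rewrite sym.
by exists a; rewrite ?inE ?eqxx // ab vd.
Qed.

Lemma pair_nbh d a b x : e d a -> e d b -> leaf e a -> leaf e b ->
  x \in closed_nbh e [set a; b] -> (x == d) || (leaf e x && e d x).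
Proof.
move=> eda edb la lb; rewrite /closed_nbh in_setU !inE.
case/orP => [/orP [] /eqP -> |]; first by rewrite la eda orbT.
  by rewrite lb edb orbT.
case/existsP => v; rewrite !inE => /andP [/orP [] /eqP -> H].
  have ead : e a d by rewrite (tr_sym tr).
  by rewrite (leaf_uniq la H ead) eqxx.
have ebd : e b d by rewrite (tr_sym tr).
by rewrite (leaf_uniq lb H ebd) eqxx.
Qed.

Lemma tree_pack : gammaP e = gamma e ->
  exists f : 'I_(gamma e) -> {set T},
    (forall i, fort e (f i)) /\
    (forall i j x, x \in closed_nbh e (f i) -> x \in closed_nbh e (f j) -> i = j).
Proof.
move=> Eg; have Hle := gammaP_le (e:=e); move: Eg Hle.
rewrite /gamma; case: (arg_minnP (fun S : {set T} => #|S|) (setT_dominating e)).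
move=> D Ddom Dmin Eg Hle.
case: (boolP [exists d in D, closed_nbh e [set d] == setT]).
  case/existsP => d /andP [dD /eqP Nd].
  have E1 : #|D| = 1.
    apply/eqP; rewrite eqn_leq; apply/andP; split.
      by rewrite -(cards1 d); apply: Dmin; rewrite /dominating Nd.
    by apply/card_gt0P; exists d.
  exists (fun _ => setT); split.
    move=> _; split; first by apply/set0Pn; exists d.
    by move=> v w; rewrite in_setT.
  move=> i j _ _ _; apply: ord_inj.
  have hi := ltn_ord i; have hj := ltn_ord j.
  move: (nat_of_ord i) (nat_of_ord j) hi hj; rewrite E1.
  by case=> [|?] // [|?].
rewrite negb_exists_in => /forallP HnT.
have H2 : forall d, d \in D ->
    [exists p : T * T, [&& e d p.1, e d p.2, leaf e p.1, leaf e p.2 & p.1 != p.2]].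
  move=> d dD; case: (boolP [exists p : T * T, [&& e d p.1, e d p.2, leaf e p.1, leaf e p.2 & p.1 != p.2]]) => // no2.
  have PD := key tr Ddom dD no2 (implyP (HnT d) dD).
  move: (Hle _ PD); rewrite Eg (cardsD1 d D) dD add1n ltnn.
  done.
have H i : exists p : T * T,
    [&& e (enum_val (A:=D) i) p.1, e (enum_val (A:=D) i) p.2, leaf e p.1, leaf e p.2 & p.1 != p.2].
  by apply/existsP; apply: H2; exact: enum_valP.
exists (fun i => [set (xchoose (H i)).1; (xchoose (H i)).2]); split.
  move=> i; case/and5P: (xchooseP (H i)) => ? ? ? ? ?; exact: (pair_fort (d := enum_val (A:=D) i)).
move=> i j x Hi Hj.
case/and5P: (xchooseP (H i)) => ai bi lai lbi nabi.
case/and5P: (xchooseP (H j)) => aj bj laj lbj nabj.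
have Qi := pair_nbh ai bi lai lbi Hi.
have Qj := pair_nbh aj bj laj lbj Hj.
have nl : forall k, ~~ leaf e (enum_val (A:=D) k).
  move=> k; case/and5P: (xchooseP (H k)) => ak bk _ _ nab; apply/negP => lk.
  by move/negP: nab; apply; apply/eqP; apply: (leaf_uniq lk).
apply: enum_val_inj.
case/orP: Qi => [/eqP xi|/andP [lx exi]]; case/orP: Qj => [/eqP xj|/andP [lx' exj]].
- by rewrite -xi -xj.
- by move: (nl i); rewrite -xi lx'.
- by move: (nl j); rewrite -xj lx.
apply: (leaf_uniq lx); by rewrite (tr_sym tr).
Qed.

End TP.

Theorem theorem1p3 (T1 T2 : finType) (e1 : rel T1) (e2 : rel T2) :
  tree e1 -> tree e2 ->
  gammaP e1 = gamma e1 -> gammaP e2 = gamma e2 ->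
  gammaP e1 * gammaP e2 <= gammaP (box e1 e2).
Proof.
move=> t1 t2 E1 E2.
case: (tree_pack t1 E1) => f1 [F1 D1]; case: (tree_pack t2 E2) => f2 [F2 D2].
rewrite E1 E2; apply: (packing (tr_sym t1) (tr_sym t2) F1 D1 F2 D2).
exact: gammaP_spec.
Qed.
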